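(* Let $\mathbb{K}$ be a field of characteristic $0$, $R=\mathbb{K}[x_1,\dots,x_n]$, let $P\subseteq R$ be a maximal ideal such that $P\neq\mathfrak m_q$ for every $q\in\mathbb{K}^n$, and let $I\subseteq R$ be a zero-dimensional $P$-primary ideal. Let $p=(\bar x_1,\dots,\bar x_n)\in\kappa(P)^n$ (images of the variables in $\kappa(P)=R/P$), a point at which all elements of $P$ vanish, and let $\mathfrak m_p=(x_1-p_1,\dots,x_n-p_n)\subseteq\kappa(P)[x_1,\dots,x_n]$. Let $I_{\kappa(P)}$ be the extension of $I$ to $\kappa(P)[x_1,\dots,x_n]$. Then the $\kappa(P)$-vector spaces $D_{\mathfrak m_p}[I_{\kappa(P)}]$ and $D_P[I]$ are equal.
   Context: For $q\in\mathbb{K}^n$, $\mathfrak m_q$ is the maximal ideal of $q$. Let $W_{\kappa(P)}$ denote the space of operators $D=\sum_\alpha c_\alpha\partial^\alpha$ with $c_\alpha\in\kappa(P)$ (finite sums, $\partial^\alpha=\partial_1^{\alpha_1}\cdots\partial_n^{\alpha_n}$, $\partial_i=\partial/\partial x_i$). For $f\in R$, $\langle D,f\rangle_{\kappa(P)}:=\sum_\alpha c_\alpha\,\overline{\partial^\alpha f}\in\kappa(P)$ (image modulo $P$), and $D_P[I]:=\{D\in W_{\kappa(P)}:\langle D,f\rangle_{\kappa(P)}=0\ \forall f\in I\}$. For $f\in\kappa(P)[x_1,\dots,x_n]$, $\langle D,f\rangle_{\kappa(\mathfrak m_p)}:=\sum_\alpha c_\alpha(\partial^\alpha f)(p)\in\kappa(P)$,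 and for an ideal $J\subseteq\kappa(P)[x_1,\dots,x_n]$, $D_{\mathfrak m_p}[J]:=\{D\in W_{\kappa(P)}:\langle D,f\rangle_{\kappa(\mathfrak m_p)}=0\ \forall f\in J\}$. *)

(* Defs.v *)
From HB Require Import structures.
From mathcomp Require Import all_boot all_order all_algebra.
From mathcomp Require Import mpoly.
Set Implicit Arguments. Unset Strict Implicit. Unset Printing Implicit Defensive.
Import GRing.Theory.
Local Open Scope ring_scope.

Section Ideals.
Variable R : comRingType.

Definition is_ideal (I : R -> Prop) : Prop :=
  [/\ I 0, (forall a b, I a -> I b -> I (a + b)) & (forall r a, I a -> I (r * a))].

Definition is_proper (I : R -> Prop) : Prop := ~ I 1.

Definition is_prime_ideal (Q : R -> Prop) : Prop :=
  [/\ is_ideal Q, is_proper Q & forall a b, Q (a * b) -> Q a \/ Q b].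

Definition is_maximal_ideal (M : R -> Prop) : Prop :=
  [/\ is_ideal M, is_proper M &
      forall J, is_ideal J -> (forall f, M f -> J f) ->
        (forall f, J f <-> M f) \/ (forall f, J f)].

Definition is_primary_to (I P : R -> Prop) : Prop :=
  [/\ is_ideal I, is_proper I,
      (forall a b, I (a * b) -> ~ I a -> exists k, I (b ^+ k)) &
      (forall f, P f <-> exists k, I (f ^+ k))].

Definition zero_dimensional (I : R -> Prop) : Prop :=
  forall Q, is_prime_ideal Q -> (forall f, I f -> Q f) -> is_maximal_ideal Q.

Definition gen_ideal (A : R -> Prop) : R -> Prop :=
  fun f => exists m (g a : 'I_m -> R), (forall j, A (a j)) /\ f = \sum_(j < m) g j * a j.
End Ideals.

Definition max_ideal_at (K : comRingType) (n : nat) (q : 'I_n -> K)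
  : {mpoly K[n]} -> Prop :=
  gen_ideal (fun g => exists i : 'I_n, g = 'X_i - (q i)%:MP).

Definition ext_ideal (R S : comRingType) (phi : R -> S) (I : R -> Prop) : S -> Prop :=
  gen_ideal (fun g => exists h, I h /\ g = phi h).

(* A differential operator D = sum_alpha c_alpha d^alpha with coefficients
   in L is encoded by its finitely supported coefficient map alpha |-> c_alpha,
   stored as an element of {mpoly L[n]} (c_alpha = D@_alpha). *)
Definition diffop (L : ringType) (n : nat) := {mpoly L[n]}.

Definition pair_P (K L : comRingType) (n : nat) (pi : {mpoly K[n]} -> L)
  (D : diffop L n) (f : {mpoly K[n]}) : L :=
  \sum_(a <- msupp D) D@_a * pi (f^`M[a]).

Definition pair_pt (L : comRingType) (n : nat) (p : 'I_n -> L)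
  (D : diffop L n) (f : {mpoly L[n]}) : L :=
  \sum_(a <- msupp D) D@_a * (f^`M[a]).@[p].

(* Main.v *)
Require Import Defs.
From HB Require Import structures.
From mathcomp Require Import all_boot all_order all_algebra.
From mathcomp Require Import mpoly.
Import GRing.Theory.
Local Open Scope ring_scope.

Section Helpers.
Variables (K L : fieldType) (n : nat).

Lemma map_mderivm (f : {rmorphism K -> L}) (g : {mpoly K[n]}) m :
  map_mpoly f (g^`M[m]) = (map_mpoly f g)^`M[m].
Proof.
apply/mpolyP=> m'.
by rewrite mcoeff_map_mpoly !mcoeff_mderivm mcoeff_map_mpoly raddfMn.
Qed.

Lemma pi_meval (pi : {rmorphism {mpoly K[n]} -> L}) (g : {mpoly K[n]}) :
  pi g = (map_mpoly (pi \o (@mpolyC n K)) g).@[fun i => pi 'X_i].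
Proof.
rewrite (map_mpolyE (pi \o (@mpolyC n K)) (leqnn (msize g))).
rewrite [in LHS](mpolywE (leqnn (msize g))).
rewrite !raddf_sum; apply: eq_bigr => m _.
rewrite -[RHS]/(meval (fun i => pi (@mpolyX n K (mnm1 i))) ((pi \o @mpolyC n K) g@_m *: @mpolyX n L m)). rewrite mevalZ mevalX -mul_mpolyC.
rewrite -[LHS]/(pi ((g@_m)%:MP * 'X_[m])) rmorphM /=.
by rewrite mpolyXE_id rmorph_prod; congr (_ * _); apply: eq_bigr => i _;
  rewrite rmorphXn.
Qed.

Lemma pair_pt_sum (p : 'I_n -> L) (D : diffop L n) (T : Type) (r : seq T) (F : T -> {mpoly L[n]}) :
  pair_pt p D (\sum_(x <- r) F x) = \sum_(x <- r) pair_pt p D (F x).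
Proof.
rewrite /pair_pt exchange_big /=; apply: eq_bigr => a _.
by rewrite raddf_sum /= raddf_sum mulr_sumr.
Qed.

Lemma pair_ptZ (p : 'I_n -> L) (D : diffop L n) c F :
  pair_pt p D (c *: F) = c * pair_pt p D F.
Proof.
rewrite /pair_pt mulr_sumr; apply: eq_bigr => a _.
by rewrite mderivmZ mevalZ mulrCA.
Qed.

End Helpers.

Theorem lemma3p8 (K : fieldType) (n : nat)
  (charK0 : [pchar K] =i pred0)
  (P I : {mpoly K[n]} -> Prop)
  (hP : is_maximal_ideal P)
  (hPnot : forall q : 'I_n -> K, ~ (forall f, P f <-> max_ideal_at q f))
  (hI0 : zero_dimensional I) (hIP : is_primary_to I P)
  (L : fieldType) (pi : {rmorphism {mpoly K[n]} -> L})
  (pi_surj : forall y : L, exists f, pi f = y)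
  (pi_ker : forall f, pi f = 0 <-> P f) :
  let p : 'I_n -> L := fun i => pi 'X_i in
  let iota : K -> L := fun c => pi c%:MP in
  let IL := ext_ideal (map_mpoly iota) I in
  forall D : diffop L n,
    (forall f, IL f -> pair_pt p D f = 0) <->
    (forall f, I f -> pair_P pi D f = 0).
Proof.
move=> p iota IL D.
have key : forall g, pair_P pi D g = pair_pt p D (map_mpoly (pi \o (@mpolyC n K)) g).
  move=> g; rewrite /pair_P /pair_pt; apply: eq_bigr => a _.
  by rewrite pi_meval map_mderivm.
case: hIP => [[_ _ Imul] _ _ _].
split.
- move=> H f If; rewrite key; apply: H.
  exists 1%N, (fun _ => 1), (fun _ => map_mpoly iota f); split.
    by move=> j; exists f.
  by rewrite big_ord1 mul1r.
- move=> H f [m [g [a [Ha ->]]]].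
  rewrite pair_pt_sum big1 // => j _.
  have [h [Ih ->]] := Ha j.
  rewrite (mpolyE (g j)) mulr_suml pair_pt_sum big1_seq // => mm _.
  rewrite -scalerAl pair_ptZ.
  have -> : 'X_[mm] * map_mpoly iota h = map_mpoly (pi \o (@mpolyC n K)) ('X_[mm] * h).
    by rewrite rmorphM /= map_mpolyX.
  by rewrite -key H ?mulr0 //; apply: Imul.
Qed.
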